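(* Let $\Lambda=\operatorname{diag}(1,2)$. Among all $2\times2$ unimodular zerofree matrices $M$ such that $M\Lambda M^{-1}$ is also zerofree, the minimum of $\|M\Lambda M^{-1}\|$ is $4$, attained by $M=\begin{pmatrix}1&2\\1&3\end{pmatrix}$, for which $M\Lambda M^{-1}=\begin{pmatrix}-1&2\\-3&4\end{pmatrix}$.
   Context: A square integer matrix is unimodular if its determinant is $\pm1$. An invertible matrix $Z$ is zerofree if none of the entries of $Z$ and none of the entries of $Z^{-1}$ is zero. For a matrix $A$, $\|A\|$ denotes the maximum of the absolute values of its entries. *)

(* Defs.v *)
From HB Require Import structures.
From mathcomp Require Import all_boot all_order all_algebra.
Set Implicit Arguments. Unset Strict Implicit. Unset Printing Implicit Defensive.
Import Order.TTheory GRing.Theory Num.Theory.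
Local Open Scope ring_scope.

Definition mx2 {R : Type} (a b c d : R) : 'M[R]_2 :=
  \matrix_(i < 2, j < 2)
    if (i == 0 :> nat) then (if (j == 0 :> nat) then a else b)
    else (if (j == 0 :> nat) then c else d).

Definition unimodular (n : nat) (M : 'M[int]_n) : Prop :=
  \det M = 1 \/ \det M = -1.

Definition toQ (m n : nat) (M : 'M[int]_(m, n)) : 'M[rat]_(m, n) :=
  map_mx (fun z : int => z%:~R) M.

Definition zerofree (n : nat) (Z : 'M[rat]_n) : Prop :=
  Z \in unitmx /\ (forall i j, Z i j != 0) /\ (forall i j, invmx Z i j != 0).

Definition mxnorm (m n : nat) (A : 'M[rat]_(m, n)) : rat :=
  \big[Num.max/0]_(i < m) \big[Num.max/0]_(j < n) `|A i j|.

Definition Lambda : 'M[rat]_2 := mx2 1 0 0 2.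

Definition conjL (M : 'M[int]_2) : 'M[rat]_2 :=
  toQ M *m Lambda *m invmx (toQ M).

(* Main.v *)
Require Import Defs.
From HB Require Import structures.
From mathcomp Require Import all_boot all_order all_algebra.
From mathcomp Require Import zify ring lra.
Import Order.TTheory GRing.Theory Num.Theory.
Local Open Scope ring_scope.

Lemma mx2_eta {R : Type} (M : 'M[R]_2) : M = mx2 (M 0 0) (M 0 1) (M 1 0) (M 1 1).
Proof.
apply/matrixP => i j; rewrite mxE.
case: i => [[|[|i]] Hi]; case: j => [[|[|j]] Hj] //=;
  by congr (M _ _); apply/val_inj.
Qed.

Lemma mx2_mul {R : comNzRingType} (a b c d a' b' c' d' : R) :
  mx2 a b c d *m mx2 a' b' c' d' = mx2 (a*a'+b*c') (a*b'+b*d') (c*a'+d*c') (c*b'+d*d').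
Proof.
apply/matrixP => i j; rewrite !mxE !big_ord_recl big_ord0 !mxE /=.
case: i => [[|[|i]] Hi]; case: j => [[|[|j]] Hj] //=; by rewrite addr0.
Qed.

Lemma det_mx2 {R : comNzRingType} (a b c d : R) : \det (mx2 a b c d) = a * d - b * c.
Proof.
rewrite (expand_det_row _ 0) !big_ord_recl big_ord0 /cofactor !det_mx11 !mxE /=.
by rewrite !expr0 !expr1 !mul1r addr0 mulN1r mulrN.
Qed.

Lemma mx2_1 {R : comNzRingType} : (1%:M : 'M[R]_2) = mx2 1 0 0 1.
Proof.
apply/matrixP => i j; rewrite !mxE.
case: i => [[|[|i]] Hi]; case: j => [[|[|j]] Hj] //=.
Qed.

Lemma inv_mx2 {F : fieldType} (a b c d : F) : a * d - b * c != 0 ->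
  mx2 a b c d \in unitmx /\
  invmx (mx2 a b c d) = mx2 (d/(a*d-b*c)) (-b/(a*d-b*c)) (-c/(a*d-b*c)) (a/(a*d-b*c)).
Proof.
move=> he.
pose B := mx2 (d/(a*d-b*c)) (-b/(a*d-b*c)) (-c/(a*d-b*c)) (a/(a*d-b*c)).
have H : mx2 a b c d *m B = 1%:M.
  by rewrite /B mx2_mul mx2_1; congr mx2; field; exact: he.
have [U _] := mulmx1_unit H.
split=> //.
by rewrite -[invmx _]mulmx1 -H mulmxA mulVmx // mul1mx.
Qed.

Lemma toQ_mx2 (a b c d : int) : toQ (mx2 a b c d) = mx2 a%:~R b%:~R c%:~R d%:~R.
Proof.
apply/matrixP => i j; rewrite !mxE.
by case: ifP => _; case: ifP.
Qed.

Lemma conjL_mx2 (a b c d : int) : let e := (a*d-b*c)%:~R : rat in e != 0 ->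
  conjL (mx2 a b c d) = mx2 ((a*d-2*b*c)%:~R/e) ((a*b)%:~R/e) (-(c*d)%:~R/e)
     ((2*a*d-b*c)%:~R/e).
Proof.
move=> e he.
have he' : (a%:~R * d%:~R - b%:~R * c%:~R : rat) != 0.
  by move: he; rewrite /e rmorphB !rmorphM.
rewrite /conjL toQ_mx2 /Lambda.
have [_ ->] := inv_mx2 _ _ _ _ he'.
rewrite !mx2_mul /e; congr mx2; rewrite ?rmorphB ?rmorphN ?rmorphM /=; field;
 exact: he'.
Qed.

Lemma mxnorm2 (A : 'M[rat]_2) : `|A 0 0| <= mxnorm A /\ `|A 1 1| <= mxnorm A.
Proof.
rewrite /mxnorm !big_ord_recl !big_ord0.
have -> : lift ord0 ord0 = 1 :> 'I_2 by apply/val_inj.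
by split; rewrite !le_max ?lexx ?orbT.
Qed.

Lemma part1 (M : 'M[int]_2) :
      unimodular M -> zerofree (toQ M) -> zerofree (conjL M) ->
      4 <= mxnorm (conjL M).
Proof.
rewrite (mx2_eta M); move: (M 0 0) (M 0 1) (M 1 0) (M 1 1) => a b c d.
rewrite /unimodular det_mx2 => hU [_ [hZ _]] [_ [hC _]].
have ha : a != 0 by have := hZ 0 0; rewrite toQ_mx2 mxE /= intr_eq0.
have hb : b != 0 by have := hZ 0 1; rewrite toQ_mx2 mxE /= intr_eq0.
have hc : c != 0 by have := hZ 1 0; rewrite toQ_mx2 mxE /= intr_eq0.
have hd : d != 0 by have := hZ 1 1; rewrite toQ_mx2 mxE /= intr_eq0.
have he : ((a*d-b*c)%:~R : rat) != 0 by case: hU => ->.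
have h00 := hC 0 0; have h11 := hC 1 1.
rewrite conjL_mx2 // !mxE /= in h00 h11.
set C := conjL _.
suff : 4 <= `|C 0 0| \/ 4 <= `|C 1 1|.
  by case=> h; [apply: le_trans h (mxnorm2 _).1 | apply: le_trans h (mxnorm2 _).2].
rewrite /C conjL_mx2 // !mxE /=.
have h4 : (4:rat) = (4:int)%:~R by [].
have had : a * d != 0 by rewrite mulf_neq0.
have hbc : b * c != 0 by rewrite mulf_neq0.
case: hU => hE; rewrite hE in h00 h11 *.
- rewrite !divr1 in h00 h11 *.
  rewrite !intr_eq0 in h00 h11.
  rewrite h4 -!intr_norm !ler_int.
  rewrite -!mulrA in h00 h11 *.
  move: had hbc hE h00 h11; move: (a*d) (b*c) => p q; lia.
- rewrite rmorphN1 invrN1 !mulrN1 !normrN !oppr_eq0 in h00 h11 *.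
  rewrite !intr_eq0 in h00 h11.
  rewrite h4 -!intr_norm !ler_int.
  rewrite -!mulrA in h00 h11 *.
  move: had hbc hE h00 h11; move: (a*d) (b*c) => p q; lia.
Qed.

Lemma zf_mx2 (a b c d : rat) : a * d - b * c != 0 ->
  a != 0 -> b != 0 -> c != 0 -> d != 0 -> zerofree (mx2 a b c d).
Proof.
move=> he ha hb hc hd; rewrite /zerofree; have [U ->] := inv_mx2 _ _ _ _ he.
split=> //; split=> i j; rewrite mxE;
  case: ifP => _; case: ifP => _; rewrite ?mulf_neq0 ?oppr_eq0 ?invr_eq0 //.
Qed.

Lemma part2 : unimodular (mx2 1 2 1 3) /\ zerofree (toQ (mx2 1 2 1 3))
      /\ zerofree (conjL (mx2 1 2 1 3))
      /\ conjL (mx2 1 2 1 3) = mx2 (-1) 2 (-3) 4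
      /\ mxnorm (conjL (mx2 1 2 1 3)) = 4.
Proof.
have hc : conjL (mx2 1 2 1 3) = mx2 (-1) 2 (-3) 4.
  by rewrite conjL_mx2 //.
split; first by left; rewrite det_mx2.
split; first by rewrite toQ_mx2; apply: zf_mx2.
split; first by rewrite hc; apply: zf_mx2.
split=> //.
by rewrite hc /mxnorm !big_ord_recl !big_ord0 !mxE.
Qed.

Theorem mainTheorem7 :
  (forall M : 'M[int]_2,
      unimodular M -> zerofree (toQ M) -> zerofree (conjL M) ->
      4 <= mxnorm (conjL M))
  /\ (unimodular (mx2 1 2 1 3) /\ zerofree (toQ (mx2 1 2 1 3))
      /\ zerofree (conjL (mx2 1 2 1 3))
      /\ conjL (mx2 1 2 1 3) = mx2 (-1) 2 (-3) 4
      /\ mxnorm (conjL (mx2 1 2 1 3)) = 4).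
Proof. split; [exact: part1 | exact: part2]. Qed.
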